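(* Let $G$ be a connected block graph on $n$ vertices with blocks $B_1,\dots,B_t$ of orders $b_1,\dots,b_t$, and equip $V(G)$ with a Hamming labelling as described in the context. Let $S\subseteq V(G)$ with $|S|=k$, $2\le k\le n$. Then $$d(S)=\sum_{i=1}^t \ell_i(S) - t,$$ where $\ell_i(S)$ is the number of distinct values taken by the $i$-th coordinates of the labels of the vertices in $S$.
   Context: A block of a graph is a maximal connected induced subgraph without cut vertices; a block graph is a graph in which every block is a clique. For connected $G$ and $S\subseteq V(G)$, the Steiner distance $d(S)$ is the minimum number of edges of a connected subgraph of $G$ whose vertex set contains $S$. $G\setminus B_i$ denotes the graph obtained from $G$ by deleting all edges of block $B_i$; each connected component of $G\setminus B_i$ contains exactly one vertex of $B_i$. Hamming labelling: for each $i\in\{1,\dots,t\}$ choose an injective map $f_i:V(B_i)\to\{0,1,\dots,b_i-1\}$; for a vertex $u\in V(G)$, its $i$-th coordinate is $f_i(w)$, where $w$ is the unique vertex of $B_i$ lying in the connected component of $G\setminus B_i$ that contains $u$. The label of $u$ is the $t$-tuple of its coordinates (this gives an isometric embedding of $G$ into $K_{b_1}\square\cdots\square K_{b_t}$). *)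

(* Defs.v *)
From mathcomp Require Import all_boot.
Set Implicit Arguments. Unset Strict Implicit. Unset Printing Implicit Defensive.

Section Graph.
Variables (T : finType) (e : rel T).

Definition erestr (B : {set T}) : rel T :=
  [rel x y | [&& e x y, x \in B & y \in B]].

(* the induced subgraph on B is connected (vacuous for the empty set) *)
Definition connected_on (B : {set T}) : bool :=
  [forall x in B, forall y in B, connect (erestr B) x y].

Definition nocut (B : {set T}) : bool :=
  connected_on B && [forall v in B, connected_on (B :\ v)].

Definition is_block (B : {set T}) : bool :=
  [&& B != set0, nocut B &
      [forall B' : {set T}, ((B \subset B') && nocut B') ==> (B' == B)]].

Definition blocks : {set {set T}} := [set B | is_block B].

Definition clique (B : {set T}) : Prop :=
  forall x y, x \in B -> y \in B -> x != y -> e x y.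

Definition block_graph : Prop := forall B, is_block B -> clique B.

(* G \ B : delete all edges of block B *)
Definition edel (B : {set T}) : rel T :=
  [rel x y | e x y && ~~ ((x \in B) && (y \in B))].

(* the unique vertex of B in the component of G \ B containing u *)
Definition bproj (B : {set T}) (u : T) : T :=
  odflt u [pick w in B | connect (edel B) u w].

Definition hamming_labelling (f : {set T} -> T -> nat) : Prop :=
  forall B, B \in blocks ->
    {in B &, injective (f B)} /\ (forall x, x \in B -> f B x < #|B|).

Definition coord (f : {set T} -> T -> nat) (B : {set T}) (u : T) : nat :=
  f B (bproj B u).

Definition ell (f : {set T} -> T -> nat) (B : {set T}) (S : {set T}) : nat :=
  size (undup [seq coord f B u | u <- enum S]).

Definition edge_set : {set {set T}} :=
  [set E : {set T} | [exists x, exists y, e x y && (E == [set x; y])]].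

Definition conn_subgraph (W : {set T}) (F : {set {set T}}) : Prop :=
  F \subset edge_set /\ (forall E, E \in F -> E \subset W) /\
  (forall x y, x \in W -> y \in W ->
     connect [rel a b | [set a; b] \in F] x y).

Definition steiner_dist (S : {set T}) (d : nat) : Prop :=
  (exists W F, conn_subgraph W F /\ S \subset W /\ #|F| = d) /\
  (forall W F, conn_subgraph W F -> S \subset W -> d <= #|F|).

End Graph.

(* Main.v *)
Require Import Defs.
From mathcomp Require Import all_boot zify.
Set Implicit Arguments. Unset Strict Implicit. Unset Printing Implicit Defensive.


Section G1.
Variables (T : finType) (e : rel T).
Implicit Types (A X : {set T}) (x y z r u v w a b : T) (q l : seq T).
Hypothesis e_sym : symmetric e.

Lemma erestr_sym A : symmetric (erestr e A).
Proof. by move=> x y; rewrite /erestr /= e_sym; case: (e y x); case: (x \in A); case: (y \in A). Qed.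

Lemma cn_sym A x y : connect (erestr e A) x y = connect (erestr e A) y x.
Proof. by apply: sym_connect_sym; apply: erestr_sym. Qed.

Lemma cn_mono A A' x y : A \subset A' ->
  connect (erestr e A) x y -> connect (erestr e A') x y.
Proof.
move=> sAA'; apply: connect_sub => a b /= /and3P[eab aA bA].
by apply: connect1; rewrite /erestr /= eab (subsetP sAA' _ aA) (subsetP sAA' _ bA).
Qed.

Lemma conn_base A r : r \in A -> (forall z, z \in A -> connect (erestr e A) z r) ->
  connected_on e A.
Proof.
move=> rA H; apply/forallP => x; apply/implyP => xA; apply/forallP => y;
apply/implyP => yA.
by apply: connect_trans (H _ xA) _; rewrite cn_sym; apply: H.
Qed.

Lemma conn_use A u v : connected_on e A -> u \in A -> v \in A ->
  connect (erestr e A) u v.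
Proof. by move=> /forallP/(_ u)/implyP H uA vA; move: (H uA) => /forallP/(_ v)/implyP; apply. Qed.

Lemma path_conn A a l : path e a l -> {subset a :: l <= A} ->
  forall w, w \in a :: l -> connect (erestr e A) a w.
Proof.
move=> pl sub; apply: path_connect.
apply: (@sub_in_path _ (mem A) e) => //.
  by move=> x y xA yA exy; rewrite /erestr /= exy xA yA.
by apply/allP => z /sub.
Qed.

Lemma path_conn2 A a l : path e a l -> {subset a :: l <= A} ->
  forall w w', w \in a :: l -> w' \in a :: l -> connect (erestr e A) w w'.
Proof.
move=> pl sub w w' ww ww'; apply: connect_trans (path_conn pl sub ww').
by rewrite cn_sym; apply: path_conn pl sub _ ww.
Qed.

Lemma path_conn_tail A a l : path e a l -> {subset l <= A} ->
  forall w w', w \in l -> w' \in l -> connect (erestr e A) w w'.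
Proof.
case: l => [//|b l] /= /andP[_ pl] sub; exact: path_conn2 pl sub.
Qed.

Lemma ear X x y q : nocut e X -> x \in X -> y \in X -> x != y ->
  path e x (rcons q y) -> uniq q -> (forall w, w \in q -> w \notin X) ->
  nocut e (X :|: [set w in q]).
Proof.
move=> /andP[cX /forallP cXv] xX yX xy pq uq qX.
set B' := X :|: _.
have XB : X \subset B' by apply: subsetUl.
have qB w : w \in q -> w \in B' by move=> wq; rewrite !inE wq orbT.
have := pq; rewrite rcons_path => /andP[pxq _].
apply/andP; split.
  apply: (conn_base (r := x)); first by rewrite inE xX.
  move=> z; rewrite !inE => /orP[zX|zq].
    by apply: cn_mono XB _; apply: conn_use.
  rewrite cn_sym; apply: path_conn pxq _ _ _; last by rewrite inE zq orbT.
  by move=> w; rewrite inE => /orP[/eqP->|/qB//]; rewrite inE xX.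
apply/forallP => v; apply/implyP => vB.
case vX : (v \in X).
  have cXv' : connected_on e (X :\ v) by move: (cXv v); rewrite vX.
  have sXv : X :\ v \subset B' :\ v by apply: setSD.
  pose r := if v == x then y else x.
  have rXv : r \in X :\ v.
    by rewrite /r; case: eqP => [->|/eqP vx]; rewrite !inE ?xX ?yX ?andbT eq_sym ?xy.
  apply: (conn_base (r := r)); first by apply: (subsetP sXv).
  move=> z; rewrite !inE => /andP[zv /orP[zX|zq]].
    by apply: cn_mono sXv _; apply: conn_use => //; rewrite !inE zv.
  have zvX : forall w, w \in q -> w \in B' :\ v.
    move=> w wq; rewrite !inE wq orbT andbT; apply/eqP => wv.
    by move: (qX _ wq); rewrite wv vX.
  rewrite /r; case: eqP => [vx|/eqP vx].
    apply: path_conn_tail pq _ _ _ _ _; last 2 first.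
      by rewrite mem_rcons inE zq orbT.
      by rewrite mem_rcons inE eqxx.
    move=> w; rewrite mem_rcons inE => /orP[/eqP->|/zvX//].
    by rewrite !inE yX andbT vx eq_sym.
  rewrite cn_sym; apply: path_conn pxq _ _ _; last by rewrite inE zq orbT.
  move=> w; rewrite inE => /orP[/eqP->|/zvX//].
  by rewrite !inE xX andbT eq_sym.
have vq : v \in q by move: vB; rewrite !inE vX.
have sXv : X \subset B' :\ v.
  apply/subsetP => w wX; rewrite !inE wX andbT; apply/eqP => wv.
  by move: vX; rewrite -wv wX.
apply: (conn_base (r := x)); first by apply: (subsetP sXv).
have [q1 [q2 qE]] : exists q1 q2, q = q1 ++ v :: q2.
  by case/splitPr: vq => q1 q2; exists q1, q2.
move: uq; rewrite qE cat_uniq /= => /and3P[_ hq /andP[vq2 _]].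
have vq1 : v \notin q1 by move: hq; rewrite /= negb_or => /andP[].
have zvq w : w \in q -> w != v -> w \in B' :\ v.
  by move=> wq wv; rewrite !inE wq orbT andbT.
move=> z; rewrite !inE => /andP[zv /orP[zX|zq]].
  by apply: cn_mono sXv _; apply: conn_use.
move: zq; rewrite qE mem_cat inE => /orP[zq1|/orP[/eqP zv'|zq2]].
- rewrite cn_sym; have := pxq; rewrite qE cat_path => /andP[p1 _].
  apply: path_conn p1 _ _ _; last by rewrite inE zq1 orbT.
  move=> w; rewrite inE => /orP[/eqP->|wq1]; first by apply: (subsetP sXv).
  apply: zvq; first by rewrite qE mem_cat wq1.
  by apply: contraNneq vq1 => <-.
- by move: zv; rewrite zv' eqxx.
- have := pq; rewrite qE rcons_cat cat_path => /andP[_] /= /andP[_ p2].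
  apply: (@connect_trans _ _ y).
    apply: path_conn_tail p2 _ _ _ _ _; last 2 first.
      by rewrite mem_rcons inE zq2 orbT.
      by rewrite mem_rcons inE eqxx.
    move=> w; rewrite mem_rcons inE => /orP[/eqP->|wq2].
      by apply: (subsetP sXv).
    apply: zvq; first by rewrite qE mem_cat inE wq2 !orbT.
    by apply: contraNneq vq2 => <-.
  by apply: cn_mono sXv _; apply: conn_use.
Qed.
End G1.


Lemma split_first (T : eqType) (P : pred T) (p : seq T) : has P p ->
  exists q b r, p = q ++ b :: r /\ P b /\ ~~ has P q.
Proof.
elim: p => [//|a p IH] /=; case Pa: (P a) => /=.
  by move=> _; exists [::], a, p.
move=> /IH [q [b [r [-> [Pb hq]]]]]; exists (a :: q), b, r.
by rewrite /= Pa.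
Qed.

Section G2.
Variables (T : finType) (e : rel T).
Implicit Types (A B C X Y : {set T}) (x y z r u v w a b : T) (q l : seq T).
Hypothesis e_sym : symmetric e.
Hypothesis e_irr : irreflexive e.

Lemma edel_sym B : symmetric (edel e B).
Proof. by move=> x y; rewrite /edel /= e_sym; case: (e y x); case: (x \in B); case: (y \in B). Qed.

Lemma noK B x y : is_block e B -> x \in B -> y \in B ->
  connect (edel e B) x y -> x = y.
Proof.
move=> bB xB yB /connectP[p pp yE]; subst y.
apply/eqP; apply/negPn/negP => xl.
case: (shortenP pp) xl yB => p' pp' up' _ xl yB.
have hp : has (mem B) p'.
  apply/hasP; exists (last x p') => //.
  by move: (mem_last x p'); rewrite inE eq_sym (negbTE xl).
have [q [b [r0 [pE [bB' hq]]]]] := split_first hp.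
have {}bB' : b \in B by [].
move: pp' up'; rewrite pE cat_path /= => /and3P[pxq eb _].
rewrite cat_uniq /= => /andP[xp' /and3P[uq _ _]].
have pe : path e x (rcons q b).
  rewrite rcons_path; apply/andP; split.
    by apply: sub_path pxq => a c /andP[].
  by move: eb => /andP[].
have xb : x != b.
  by apply: contraNneq xp' => ->; rewrite mem_cat inE eqxx orbT.
have qX w : w \in q -> w \notin B.
  by move=> wq; apply: contra hq => wB; apply/hasP; exists w.
case: q pxq eb pe uq qX hq {pE xp'} => [|w q] pxq eb pe uq qX hq.
  by move: eb; rewrite /edel /= xB bB' andbF.
have ncB : nocut e B by case/and3P: bB.
have nc := ear e_sym ncB xB bB' xb pe uq qX.
move: bB => /and3P[_ _ /forallP /(_ (B :|: [set w0 in w :: q]))].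
rewrite subsetUl nc /= => /eqP BE.
by move: (qX w (mem_head _ _)); rewrite -BE !inE eqxx !orbT.
Qed.
End G2.


Section G3.
Variables (T : finType) (e : rel T).
Implicit Types (A B C X Y : {set T}) (x y z r u v w a b : T) (q l : seq T).
Hypothesis e_sym : symmetric e.
Hypothesis e_irr : irreflexive e.
Hypothesis e_conn : forall x y, connect e x y.

Lemma path_edel B a l w : path e a (rcons l w) -> a \notin B ->
  ~~ has (mem B) l -> path (edel e B) a (rcons l w).
Proof.
elim: l a => [|c l IH] a /=.
  by rewrite andbT => eaw aB _; rewrite /edel /= eaw (negbTE aB).
move=> /andP[eac pl] aB; rewrite negb_or => /andP[cB hl].
by rewrite IH // andbT /edel /= eac (negbTE aB).
Qed.

Lemma proj_exists B u : is_block e B -> exists2 w, w \in B & connect (edel e B) u w.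
Proof.
case/and3P => /set0Pn[b bB] _ _.
case uB: (u \in B); first by exists u => //; apply: connect0.
move: (e_conn u b) => /connectP[p pp bE].
have hp : has (mem B) p.
  apply/hasP; exists b => //.
  move: (mem_last u p); rewrite -bE inE => /orP[/eqP bu|//].
  by move: uB; rewrite -bu bB.
have [q [w [r0 [pE [wB hq]]]]] := split_first hp.
exists w => //; apply/connectP; exists (rcons q w); last by rewrite last_rcons.
apply: path_edel; last 2 first.
- by rewrite uB.
- exact: hq.
by move: pp; rewrite pE cat_path rcons_path /= => /and3P[-> -> _].
Qed.

Lemma bproj_spec B u : is_block e B ->
  bproj e B u \in B /\ connect (edel e B) u (bproj e B u).
Proof.
move=> bB; rewrite /bproj; case: pickP => [w /andP[wB cw]|none] //=.
have [w wB cw] := proj_exists u bB.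
by move: (none w); rewrite wB cw.
Qed.

Lemma bproj_id B w : is_block e B -> w \in B -> bproj e B w = w.
Proof.
move=> bB wB; have [pB cp] := bproj_spec w bB.
by apply: (noK e_sym bB pB wB); rewrite (sym_connect_sym (edel_sym e_sym B)).
Qed.

Lemma bproj_conn B x y : is_block e B -> connect (edel e B) x y ->
  bproj e B x = bproj e B y.
Proof.
move=> bB cxy; have [px cx] := bproj_spec x bB; have [py cy] := bproj_spec y bB.
apply: (noK e_sym bB px py).
apply: (@connect_trans _ _ x); first by rewrite (sym_connect_sym (edel_sym e_sym B)).
exact: connect_trans cxy cy.
Qed.

Lemma nocut_union X Y x y : nocut e X -> nocut e Y -> x \in X -> x \in Y ->
  y \in X -> y \in Y -> x != y -> nocut e (X :|: Y).
Proof.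
move=> /andP[cX /forallP cXv] /andP[cY /forallP cYv] xX xY yX yY xy.
have connU (A A' : {set T}) r : connected_on e A -> connected_on e A' ->
   r \in A -> r \in A' -> connected_on e (A :|: A').
  move=> cA cA' rA rA'; apply: (conn_base e_sym (r := r)); first by rewrite inE rA.
  move=> z; rewrite inE => /orP[zA|zA'].
    by apply: (cn_mono (subsetUl A A')); apply: conn_use.
  by apply: (cn_mono (subsetUr A A')); apply: conn_use.
apply/andP; split; first exact: connU cX cY xX xY.
apply/forallP => v; apply/implyP => _.
have cR (Z : {set T}) : connected_on e Z -> (forall v, (v \in Z) ==> connected_on e (Z :\ v)) ->
   connected_on e (Z :\ v).
  move=> cZ cZv; case vZ: (v \in Z); first by move: (cZv v); rewrite vZ.
  suff -> : Z :\ v = Z by [].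
  by apply/setP => z; rewrite !inE; case: eqP => // ->; rewrite vZ.
rewrite setDUl.
have [r [rv rE]] : exists r, r != v /\ ((r == x) || (r == y)).
  case: (eqVneq v x) => [->|vx]; [exists y | exists x].
    by rewrite eq_sym xy eqxx orbT.
  by rewrite eq_sym vx eqxx.
apply: (connU _ _ r); try exact: cR.
  by rewrite !inE rv; case/orP: rE => /eqP ->.
by rewrite !inE rv; case/orP: rE => /eqP ->.
Qed.

Lemma block_inter B C x y : is_block e B -> is_block e C -> x \in B -> x \in C ->
  y \in B -> y \in C -> x != y -> B = C.
Proof.
move=> bB bC xB xC yB yC xy.
have ncB : nocut e B by case/and3P: bB.
have ncC : nocut e C by case/and3P: bC.
have nU := nocut_union ncB ncC xB xC yB yC xy.
move: bB => /and3P[_ _ /forallP/(_ (B :|: C))].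
rewrite subsetUl nU /= => /eqP <-.
move: bC => /and3P[_ _ /forallP/(_ (B :|: C))].
by rewrite subsetUr nU /= => /eqP.
Qed.

Lemma clique_conn B : clique e B -> connected_on e B.
Proof.
move=> cB; apply/forallP => x; apply/implyP => xB; apply/forallP => y;
apply/implyP => yB.
case: (eqVneq x y) => [->|xy]; first exact: connect0.
by apply: connect1; rewrite /erestr /= xB yB (cB x y) .
Qed.

Lemma clique_nocut B : clique e B -> nocut e B.
Proof.
move=> cB; rewrite /nocut clique_conn //=.
apply/forallP => v; apply/implyP => _; apply: clique_conn.
by move=> a c; rewrite !inE => /andP[_ aB] /andP[_ cB'] ac; apply: cB.
Qed.

Lemma edge_in_block x y : e x y ->
  exists B, [/\ is_block e B, x \in B & y \in B].
Proof.
move=> exy.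
have P0 : ([set x; y] \subset [set x; y]) && nocut e [set x; y].
  rewrite subxx /=; apply: clique_nocut => a c; rewrite !inE.
  case/orP=> /eqP-> /orP[] /eqP->; rewrite ?eqxx // => _; by rewrite e_sym.
case: (@arg_maxnP _ [set x; y] (fun B => ([set x; y] \subset B) && nocut e B) (fun B => #|B|) P0) => B /andP[sB nB] maxB.
exists B; split; last 2 first.
- by apply: (subsetP sB); rewrite !inE eqxx.
- by apply: (subsetP sB); rewrite !inE eqxx orbT.
apply/and3P; split => //.
  by apply/set0Pn; exists x; apply: (subsetP sB); rewrite !inE eqxx.
apply/forallP => B'; apply/implyP => /andP[sBB' nB'].
have := maxB B'; rewrite (subset_trans sB sBB') nB' => /(_ isT) le.
by rewrite eq_sym eqEcard sBB' /=; exact: le.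
Qed.
End G3.


Lemma cross (T : finType) (r : rel T) (A : {set T}) x y : connect r x y ->
  x \in A -> y \notin A -> exists a b, [/\ r a b, a \in A & b \notin A].
Proof.
move=> /connectP[p pp ->]; elim: p x pp => [|c p IH] x /=.
  by move=> _ ->.
move=> /andP[rxc pp] xA; case cA: (c \in A).
  by apply: IH.
by move=> _; exists x, c; rewrite cA.
Qed.

Lemma lift_conn (T U : finType) (r : rel T) (r' : rel U) (g : T -> U) x y :
  (forall a b, r a b -> connect r' (g a) (g b)) -> connect r x y ->
  connect r' (g x) (g y).
Proof.
move=> H /connectP[p pp ->]; elim: p x pp => [|c p IH] x /=.
  by move=> _; apply: connect0.
by move=> /andP[rxc pp]; apply: connect_trans (H _ _ rxc) (IH _ pp).
Qed.

Lemma grow (T : finType) (E : {set {set T}}) p0 k :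
  k < #|[set z | connect [rel a b | [set a; b] \in E] p0 z]| ->
  exists (A : {set T}) (D : {set {set T}}),
   [/\ p0 \in A /\ A \subset [set z | connect [rel a b | [set a; b] \in E] p0 z],
    #|A| = k.+1, D \subset E, #|D| = k & forall d, d \in D -> d \subset A].
Proof.
set R0 := [set z | _].
have p0R : p0 \in R0 by rewrite inE connect0.
elim: k => [|k IH] lt.
  exists [set p0], set0; split; rewrite ?cards1 ?cards0 ?sub0set //.
    by rewrite sub1set inE eqxx.
  by move=> d; rewrite inE.
have [A [D [[p0A sA] cA sD cD dA]]] := IH (ltnW lt).
have [z zR zA] : exists2 z, z \in R0 & z \notin A.
  apply/exists_inP; rewrite -(negbK [exists _ in _, _]) negb_exists_in; apply/negP.
  move=> /forall_inP H; have : R0 \subset A by apply/subsetP => w /H; rewrite negbK.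
  by move/subset_leq_card; rewrite cA leqNgt lt.
have : connect [rel a b | [set a; b] \in E] p0 z by move: zR; rewrite inE.
move=> /cross /(_ p0A zA) [a [b [ab aA bA]]].
have bR : b \in R0.
  rewrite inE; apply: (@connect_trans _ _ a); last exact: connect1.
  by move: (subsetP sA a aA); rewrite inE.
exists (b |: A), ([set a; b] |: D); split.
- split; first by rewrite !inE p0A orbT.
  by apply/subsetP => w; rewrite in_setU1 => /orP[/eqP->|/(subsetP sA)].
- by rewrite cardsU1 bA cA.
- by apply/subsetP => d; rewrite in_setU1 => /orP[/eqP->|/(subsetP sD)].
- rewrite cardsU1 cD; case: ([set a; b] \in D) /idP => // abD.
  by move: (subsetP (dA _ abD) b); rewrite !inE eqxx orbT (negbTE bA) => /(_ isT).
- move=> d; rewrite in_setU1 => /orP[/eqP->|/dA dsub].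
    by apply/subsetP => w; rewrite !inE => /orP[]/eqP->; rewrite ?eqxx ?aA ?orbT.
  by apply: subset_trans dsub (subsetU1 _ _).
Qed.

Lemma count_conn (T : finType) (E : {set {set T}}) p0 (P : {set T}) :
  (forall p, p \in P -> connect [rel a b | [set a; b] \in E] p0 p) ->
  #|P| <= #|E| + 1.
Proof.
move=> H; set R0 := [set z | connect [rel a b | [set a; b] \in E] p0 z].
have sP : P \subset R0 by apply/subsetP => p /H; rewrite inE.
have p0R : p0 \in R0 by rewrite inE connect0.
have n0 : 0 < #|R0| by apply/card_gt0P; exists p0.
have lt : #|R0|.-1 < #|R0| by rewrite prednK.
have [A [D [_ _ sD cD _]]] := @grow _ E p0 _ lt.
apply: leq_trans (subset_leq_card sP) _.
rewrite -(prednK n0) -cD addn1 ltnS; exact: subset_leq_card.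
Qed.


Section G5.
Variables (T : finType) (e : rel T).
Implicit Types (A B C X Y W S : {set T}) (x y z r u v w a b : T) (F : {set {set T}}).
Hypothesis e_sym : symmetric e.
Hypothesis e_irr : irreflexive e.
Hypothesis e_conn : forall x y, connect e x y.
Hypothesis hbg : block_graph e.

Definition FB F B := [set E in F | E \subset B].
Definition Frel F := [rel a b | [set a; b] \in F].

Lemma Frel_sym F : symmetric (Frel F).
Proof. by move=> a b; rewrite /Frel /= setUC. Qed.

Lemma Fconn_sym F x y : connect (Frel F) x y = connect (Frel F) y x.
Proof. exact: (sym_connect_sym (@Frel_sym F)). Qed.

Lemma edge_e a b : [set a; b] \in edge_set e -> e a b.
Proof.
rewrite inE => /existsP[x /existsP[y /andP[exy /eqP E]]].
have aE : (a == x) || (a == y) by rewrite -!in_set2 -E set21.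
have bE : (b == x) || (b == y) by rewrite -!in_set2 -E set22.
have xE : (x == a) || (x == b) by rewrite -!in_set2 E set21.
have yE : (y == a) || (y == b) by rewrite -!in_set2 E set22.
move: aE bE xE yE => /orP[]/eqP-> /orP[]/eqP->; rewrite ?eqxx ?orbb //.
- by move=> _ /eqP yx; rewrite yx e_irr in exy.
- by rewrite e_sym.
- by move=> /eqP xy; rewrite xy e_irr in exy.
Qed.

Lemma e_edge a b : e a b -> [set a; b] \in edge_set e.
Proof.
by move=> eab; rewrite inE; apply/existsP; exists a; apply/existsP; exists b; rewrite eab eqxx.
Qed.

Lemma edge_split E : E \in edge_set e ->
  exists x y, [/\ E = [set x; y], e x y & x != y].
Proof.
rewrite inE => /existsP[x /existsP[y /andP[exy /eqP ->]]].
exists x, y; split => //; apply: contraTneq exy => ->; by rewrite e_irr.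
Qed.

Lemma one_block E : E \in edge_set e ->
  \sum_(B in blocks e) (E \subset B : nat) = 1.
Proof.
move=> /edge_split [x [y [-> exy xy]]].
have [B0 [bB0 xB0 yB0]] := edge_in_block e_sym exy.
have B0b : B0 \in blocks e by rewrite inE.
rewrite (bigD1 B0) //= subUset !sub1set xB0 yB0 /= big1 // => B /andP[].
rewrite inE => bB BB0; rewrite subUset !sub1set.
case: (boolP (x \in B)) => //= xB; case: (boolP (y \in B)) => //= yB.
by move: BB0; rewrite (block_inter e_sym bB bB0 xB xB0 yB yB0 xy) eqxx.
Qed.

Lemma cardF F : F \subset edge_set e -> #|F| = \sum_(B in blocks e) #|FB F B|.
Proof.
move=> sF; rewrite -sum1_card.
transitivity (\sum_(E in F) \sum_(B in blocks e) (E \subset B : nat)).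
  by apply: eq_bigr => E EF; rewrite one_block // (subsetP sF).
rewrite exchange_big; apply: eq_bigr => B _.
rewrite -sum1_card big_mkcond /= [RHS]big_mkcond /=.
by apply: eq_bigr => E _; rewrite /FB inE; case: (E \in F); case: (E \subset B).
Qed.

Lemma nonB_edel F B a b : F \subset edge_set e -> [set a; b] \in F ->
  ~~ ([set a; b] \subset B) -> edel e B a b.
Proof.
move=> sF abF nB; rewrite /edel /= edge_e ?(subsetP sF) //=.
by move: nB; rewrite subUset !sub1set.
Qed.

Lemma lowerB W F S s0 B : conn_subgraph e W F -> S \subset W -> s0 \in S ->
  is_block e B -> #|bproj e B @: S| <= #|FB F B| + 1.
Proof.
move=> [sF [FW cW]] SW s0S bB.
apply: (count_conn (p0 := bproj e B s0)) => p /imsetP[s sS ->].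
have := cW _ _ (subsetP SW _ s0S) (subsetP SW _ sS).
apply: lift_conn => a b /= abF.
case: (boolP ([set a; b] \subset B)) => abB.
  move: (abB); rewrite subUset !sub1set => /andP[aB bB'].
  rewrite !(bproj_id e_sym e_conn bB) //; apply: connect1; rewrite /= /FB inE abF abB.
  by [].
by rewrite (bproj_conn e_sym e_conn bB (connect1 (nonB_edel sF abF abB))); apply: connect0.
Qed.

Lemma exch W F S s0 B : conn_subgraph e W F -> S \subset W -> s0 \in S ->
  is_block e B ->
  exists W' F', [/\ conn_subgraph e W' F', S \subset W' &
     #|F'| + #|FB F B| + 1 <= #|F| + #|bproj e B @: S|].
Proof.
move=> [sF [FW cW]] SW s0S bB.
set P := bproj e B @: S; set c := bproj e B s0.
have cP : c \in P by apply: imset_f.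
have PB p : p \in P -> p \in B.
  by move=> /imsetP[s _ ->]; case: (bproj_spec e_conn s bB).
set Star := [set [set c; p] | p in P :\ c].
set Fm := F :\: FB F B.
set F1 := Fm :|: Star.
have sStar : Star \subset edge_set e.
  apply/subsetP => E /imsetP[p /setD1P[pc pP] ->]; apply: e_edge.
  by apply: (hbg bB); [apply: PB | apply: PB | rewrite eq_sym].
have sF1 : F1 \subset edge_set e.
  by rewrite subUset sStar andbT; exact: subset_trans (subsetDl _ _) sF.
set W' := [set x | connect (Frel F1) s0 x].
set F' := [set E in F1 | E \subset W'].
have Em a b : Frel Fm a b -> edel e B a b.
  rewrite /= inE /FB inE negb_and => /andP[/orP[]nF abF]; first by rewrite abF in nF.
  exact: nonB_edel sF abF nF.
have inv x : connect (Frel F) s0 x -> connect (Frel Fm) s0 x ||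
    (connect (Frel Fm) s0 c && connect (Frel Fm) x (bproj e B x)).
  move=> /connectP[p pp ->] {x}.
  elim/last_ind: p pp => [|p z IH] /=.
    by move=> _; rewrite connect0.
  rewrite rcons_path last_rcons => /andP[pp xz]; have := IH pp.
  set x := last s0 p.
  case: (boolP ([set x; z] \subset B)) => xzB.
    move: (xzB); rewrite subUset !sub1set => /andP[xB zB].
    rewrite (bproj_id e_sym e_conn bB zB) connect0 andbT.
    move=> /orP[cx|/andP[-> _]]; last by rewrite orbT.
    have ce : connect (edel e B) s0 x.
      by apply: connect_sub cx => a b /Em /connect1.
    have cxE : c = x.
      by rewrite /c (bproj_conn e_sym e_conn bB ce) (bproj_id e_sym e_conn bB xB).
    by rewrite cxE cx orbT.
  have xzF : [set x; z] \in F := xz.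
  have xzm : Frel Fm x z by rewrite /Frel /= in_setD /FB inE xzF xzB.
  move=> /orP[cx|/andP[cc cxb]].
    by rewrite (connect_trans cx (connect1 xzm)).
  have bz : bproj e B z = bproj e B x.
    exact: esym (bproj_conn e_sym e_conn bB (connect1 (nonB_edel sF xz xzB))).
  rewrite cc bz /=; apply/orP; right.
  apply: connect_trans _ cxb; apply: connect1; by rewrite Frel_sym.
have sub1 : subrel (Frel Fm) (connect (Frel F1)).
  by move=> a b ab; apply: connect1; rewrite /Frel /= in_setU; apply/orP; left.
have lift := connect_sub sub1.
have SW' : S \subset W'.
  apply/subsetP => s sS; rewrite inE.
  case/orP: (inv s (cW _ _ (subsetP SW _ s0S) (subsetP SW _ sS))) => [/lift //|/andP[cc cs]].
  apply: connect_trans (lift _ _ cc) _.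
  apply: (@connect_trans _ _ (bproj e B s)); last by apply: lift; rewrite Fconn_sym.
  case: (eqVneq (bproj e B s) c) => [->|ne]; first exact: connect0.
  apply: connect1; rewrite /= inE; apply/orP; right; apply/imsetP.
  by exists (bproj e B s) => //; rewrite !inE ne imset_f.
have cs' : conn_subgraph e W' F'.
  split; first by apply: subset_trans sF1; apply/subsetP => E; rewrite inE => /andP[].
  split; first by move=> E; rewrite inE => /andP[].
  have toS x : x \in W' -> connect (Frel F') s0 x.
    rewrite inE => /connectP[p pp ->].
    apply/connectP; exists p => //.
    apply: (@sub_in_path _ (mem W') (Frel F1)) => //.
      move=> a b aW bW ab; have abF : [set a; b] \in F1 := ab.
      rewrite /Frel /= inE abF /= subUset !sub1set.
      by rewrite aW bW.
    apply/allP => w wp; change (w \in W'); rewrite inE; exact: path_connect pp _ wp.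
  move=> x y xW yW; apply: connect_trans (toS y yW).
  by rewrite Fconn_sym; apply: toS.
exists W', F'; split => //.
have c1 : #|F'| <= #|F1|.
  by apply: subset_leq_card; apply/subsetP => E; rewrite inE => /andP[].
have c2 : #|F1| <= #|Fm| + #|Star| by rewrite cardsU leq_subr.
have c3 : #|Fm| + #|FB F B| = #|F|.
  have sFB : FB F B \subset F by apply/subsetP => E; rewrite inE => /andP[].
  rewrite cardsD (setIidPr sFB) subnK //; exact: subset_leq_card.
have c4 : #|Star| <= #|P :\ c| by apply: leq_imset_card.
have c5 : #|P| = #|P :\ c| + 1 by rewrite (cardsD1 c P) cP addnC.
lia.
Qed.
End G5.


Lemma undup_map_in (T : eqType) (U : eqType) (h : T -> U) (s : seq T) :
  {in s &, injective h} -> undup (map h s) = map h (undup s).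
Proof.
elim: s => [//|a s IH] hi /=.
have hi' : {in s &, injective h}.
  by move=> x y xs ys; apply: hi; rewrite inE ?xs ?ys orbT.
case: (boolP (a \in s)) => as_.
  by rewrite map_f // IH.
have -> : (h a \in map h s) = false.
  apply/negP => /mapP[b bs hab]; move: as_; rewrite (hi a b) ?bs //.
  - by rewrite inE eqxx.
  - by rewrite inE bs orbT.
by rewrite IH.
Qed.

Theorem theorem2 (T : finType) (e : rel T)
  (e_sym : symmetric e) (e_irr : irreflexive e)
  (e_conn : forall x y, connect e x y)
  (hbg : block_graph e)
  (f : {set T} -> T -> nat) (hf : hamming_labelling e f)
  (S : {set T}) (hS : 2 <= #|S|) :
  steiner_dist e S ((\sum_(B in blocks e) ell e f B S) - #|blocks e|).
Proof.
have [s0 s0S] : exists s0, s0 \in S.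
  by apply/set0Pn; rewrite -card_gt0; apply: leq_trans hS.
pose m B := #|bproj e B @: S|.
have ellE B : B \in blocks e -> ell e f B S = m B.
  move=> Bb; rewrite /ell; have bB : is_block e B by rewrite inE in Bb.
  have [finj _] := hf B Bb.
  have -> : [seq coord e f B u | u <- enum S] =
     [seq f B x | x <- [seq bproj e B u | u <- enum S]] by rewrite -map_comp.
  rewrite undup_map_in; last first.
    move=> x y /mapP[u _ ->] /mapP[v _ ->].
    by apply: finj; [case: (bproj_spec e_conn u bB) | case: (bproj_spec e_conn v bB)].
  rewrite size_map -(card_uniqP (undup_uniq _)) /m.
  apply: eq_card => x; rewrite mem_undup; apply/mapP/imsetP => [[u]|[u]].
    by rewrite mem_enum => uS ->; exists u.
  by move=> uS ->; exists u; rewrite ?mem_enum.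
have sumE : \sum_(B in blocks e) ell e f B S = \sum_(B in blocks e) m B.
  by apply: eq_bigr => B; apply: ellE.
rewrite sumE.
have lower W F : conn_subgraph e W F -> S \subset W ->
    \sum_(B in blocks e) m B <= #|F| + #|blocks e|.
  move=> cs SW; have [sF _] := cs.
  rewrite (cardF e_sym e_irr sF) -sum1_card -big_split /=.
  apply: leq_sum => B; rewrite inE => bB.
  rewrite /m; exact: (@lowerB T e e_sym e_irr e_conn W F S s0 B cs SW s0S bB).
have upper n : forall W F, conn_subgraph e W F -> S \subset W -> #|F| <= n ->
    exists W' F', [/\ conn_subgraph e W' F', S \subset W' &
       #|F'| + #|blocks e| <= \sum_(B in blocks e) m B].
  { elim: n => [|n IH] W F cs SW Fn.
  all: case: (boolP [forall B in blocks e, #|FB F B| + 1 <= m B]).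
  1,3: move=> /forall_inP H; exists W, F; split => //.
  1,2: have [sF _] := cs; rewrite (cardF e_sym e_irr sF) -sum1_card -big_split /=.
  1,2: by apply: leq_sum => B /H.
  all: rewrite negb_forall_in => /exists_inP[B Bb]; rewrite -ltnNge => lt.
  all: have bB : is_block e B by rewrite inE in Bb.
  all: have [W' [F' [cs' SW' le]]] := exch e_sym e_irr e_conn hbg cs SW s0S bB.
  - by move: le lt Fn; rewrite /m; lia.
  - apply: (IH W' F') => //; move: le lt Fn; rewrite /m; lia. }
have csT : conn_subgraph e setT (edge_set e).
  split => //; split; first by move=> E _; apply: subsetT.
  move=> x y _ _; apply: connect_sub (e_conn x y) => a b eab.
  by apply: connect1; rewrite /= e_edge.
have [W [F [cs SW le]]] := upper _ _ _ csT (subsetT S) (leqnn _).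
split.
  exists W, F; split => //; split => //.
  have := lower W F cs SW; lia.
move=> W' F' cs' SW'; have := lower W' F' cs' SW'; lia.
Qed.
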